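(* Let $\boldsymbol\theta_0,\boldsymbol\theta_1,\dots\in\mathbb{R}^{d\times d}$ be orthogonal and let $Z_0^{\parallel},Z_1^{\parallel},\dots\subseteq\mathbb{R}^d$ be linear subspaces with $\boldsymbol\theta_t Z_t^{\parallel}=Z_{t+1}^{\parallel}$; let $\mathbf{P}_t$ be the orthogonal projection onto $Z_t^{\parallel}$ and let $\alpha_t\in\mathbb{R}$. Define $\mathbf{P}_t^0=\mathbf{P}_t$, $\mathbf{P}_t^{s+1}=\boldsymbol\theta_{t-s-1}^{-1}\mathbf{P}_t^s\boldsymbol\theta_{t-s-1}$ for $0\le s\le t-1$, $\mathbf{G}_t^s=\alpha_t\mathbf{I}+(1-\alpha_t)\mathbf{P}_t^s$, and $\mathbf{F}_t=\mathbf{G}_{t-1}^{t-1}\mathbf{G}_{t-2}^{t-2}\cdots\mathbf{G}_0^0$ for $t\ge1$. Then for all $t\ge1$, $$\mathbf{F}_t=\Big(\prod_{s=0}^{t-1}\alpha_s\Big)\mathbf{I}+\Big(1-\prod_{s=0}^{t-1}\alpha_s\Big)\mathbf{P}_0 .$$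
   Context: $Z_t^{\parallel}$ is the linear embedding subspace of the data at layer $t$ of a network with linear layer maps $\boldsymbol\theta_t$; $\alpha_t$ are control regularization factors. *)

(* Defs.v *)
(* Vectors of R^d are column vectors 'cV[R]_d; a linear
   subspace of R^d is represented by a matrix Z : 'M[R]_(d,d) whose COLUMN
   space is the subspace, i.e. Z^T has the subspace as row space (mxalgebra's
   %MS theory works with row spaces). *)
From HB Require Import structures.
From mathcomp Require Import all_boot all_order all_algebra.
Set Implicit Arguments. Unset Strict Implicit. Unset Printing Implicit Defensive.
Import Order.TTheory GRing.Theory Num.Theory.
Local Open Scope ring_scope.

Definition orthogonal_mx (R : realFieldType) (d : nat) (A : 'M[R]_d) : Prop :=
  A^T *m A = 1%:M /\ A *m A^T = 1%:M.

Definition colspace (R : fieldType) (m n : nat) (A : 'M[R]_(m, n)) := A^T.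

Definition is_orth_proj (R : realFieldType) (d : nat) (Z P : 'M[R]_d) : Prop :=
  P^T = P /\ P *m P = P /\ (colspace P == colspace Z)%MS.

Fixpoint Pts (R : realFieldType) (d : nat) (theta P : nat -> 'M[R]_d)
    (t s : nat) : 'M[R]_d :=
  match s with
  | 0 => P t
  | s'.+1 => invmx (theta (t - s'.+1)%N) *m Pts theta P t s' *m theta (t - s'.+1)%N
  end.

Definition Gts (R : realFieldType) (d : nat) (theta P : nat -> 'M[R]_d)
    (alpha : nat -> R) (t s : nat) : 'M[R]_d :=
  alpha t *: 1%:M + (1 - alpha t) *: Pts theta P t s.

Fixpoint Ft (R : realFieldType) (d : nat) (theta P : nat -> 'M[R]_d)
    (alpha : nat -> R) (t : nat) : 'M[R]_d :=
  match t with
  | 0 => 1%:M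
  | t'.+1 => Gts theta P alpha t' t' *m Ft theta P alpha t'
  end.

(* Main.v *)
Require Import Defs.
From HB Require Import structures.
From mathcomp Require Import all_boot all_order all_algebra.
From mathcomp Require Import ring.
Import Order.TTheory GRing.Theory Num.Theory.
Local Open Scope ring_scope.

Lemma proj_uniq (R : realFieldType) (d : nat) (P Q : 'M[R]_d) :
  P^T = P -> P *m P = P -> Q^T = Q -> Q *m Q = Q -> (P == Q)%MS -> P = Q.
Proof.
move=> sP iP sQ iQ /andP[PQ QP].
have [X eX] := submxP PQ.
have [Y eY] := submxP QP.
have h1 : P *m Q = P by rewrite {1}eX -mulmxA iQ -eX.
have h2 : Q *m P = Q by rewrite {1}eY -mulmxA iP -eY.
by rewrite -sP -h1 trmx_mul sQ sP h2.
Qed.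

Lemma orth_inv (R : realFieldType) (d : nat) (A : 'M[R]_d) :
  orthogonal_mx A -> invmx A = A^T.
Proof.
move=> [h1 h2].
have uA : A \in unitmx by case/mulmx1_unit: h2.
by rewrite -[invmx A]mulmx1 -h2 mulmxA mulVmx // mul1mx.
Qed.

Theorem lemma5 (R : realFieldType) (d : nat)
  (theta : nat -> 'M[R]_d) (Z : nat -> 'M[R]_d) (P : nat -> 'M[R]_d)
  (alpha : nat -> R)
  (Horth : forall t, orthogonal_mx (theta t))
  (Hinv : forall t, (colspace (theta t *m Z t) == colspace (Z t.+1))%MS)
  (Hproj : forall t, is_orth_proj (Z t) (P t))
  (t : nat) (Ht : (1 <= t)%N) :
  Ft theta P alpha t =
    (\prod_(s < t) alpha s) *: 1%:M + (1 - \prod_(s < t) alpha s) *: P 0%N.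
Proof.
have step : forall k, P k.+1 = theta k *m P k *m (theta k)^T.
  move=> k.
  have [sP [iP cP]] := Hproj k.
  have [sQ [iQ cQ]] := Hproj k.+1.
  have [o1 o2] := Horth k.
  have uA : theta k \in unitmx by case/mulmx1_unit: o2.
  symmetry; apply: proj_uniq => //.
  - by rewrite !trmx_mul trmxK sP mulmxA.
  - by rewrite -!mulmxA [X in P k *m X]mulmxA o1 mul1mx [X in theta k *m X]mulmxA iP.
  - rewrite /colspace in cP cQ Hinv.
    have e1 : (theta k *m P k *m (theta k)^T :=: P k *m (theta k)^T)%MS.
      by rewrite -mulmxA; apply: eqmxMfull; rewrite row_full_unit.
    have e2 : (P k *m (theta k)^T :=: (theta k *m Z k)^T)%MS.
      by rewrite trmx_mul; apply: eqmxMr; rewrite -{1}sP; exact/eqmxP.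
    have e3 : ((Z k.+1)^T :=: P k.+1)%MS.
      apply: eqmx_sym; apply: (eqmx_trans _ (eqmxP cQ)); rewrite sQ; exact: eqmx_refl.
    apply/eqmxP; apply: eqmx_trans e1 _; apply: eqmx_trans e2 _.
    apply: eqmx_trans e3; exact: (eqmxP (Hinv k)).
have hP : forall t s, (s <= t)%N -> Pts theta P t s = P (t - s)%N.
  clear t Ht => t; elim=> [|s IH] hs; first by rewrite subn0.
  rewrite /= IH ?(ltnW hs) //.
  have -> : (t - s = (t - s.+1).+1)%N by rewrite subnS prednK // subn_gt0.
  rewrite step orth_inv // -!mulmxA.
  have [o1 o2] := Horth (t - s.+1)%N.
  by rewrite o1 mulmx1 !mulmxA o1 mul1mx.
have [sP0 [iP0 _]] := Hproj 0%N.
have key : forall a b : R,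
  (a *: 1%:M + (1 - a) *: P 0%N) *m (b *: 1%:M + (1 - b) *: P 0%N)
  = (a * b) *: 1%:M + (1 - a * b) *: P 0%N.
  move=> a b.
  rewrite mulmxDl !mulmxDr -!scalemxAl -!scalemxAr !mul1mx !mulmx1 iP0 !scalerA.
  rewrite -!addrA; congr (_ + _); rewrite addrA -!scalerDl; congr (_ *: _).
  ring.
have G : forall u, Gts theta P alpha u u = alpha u *: 1%:M + (1 - alpha u) *: P 0%N.
  by move=> u; rewrite /Gts hP // subnn.
clear Ht; elim: t => [|t IH].
  by rewrite big_ord0 subrr scale0r addr0 scale1r.
by rewrite /= IH G key big_ord_recr /= mulrC.
Qed.
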